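(* Let $q\ge3$ be a prime power, $1\le d\le e$, $0\le i\le d$, $1\le j\le d$, $h_{\max}=\min\{j,d-i\}$, and $s=b_{h_{\max}}(i,j)$. Then $$\tfrac14 q^{s}<|B_j(i)|<2q^{s}.$$
   Context: For integers $m\ge 0$ and $l$, ${m\brack l}=\prod_{t=1}^{l}\frac{q^{m-t+1}-1}{q^t-1}$ for $l\ge0$ and $0$ for $l<0$. For $0\le i,j\le d$, $$B_j(i)=\sum_{h=0}^{\min\{j,d-i\}}(-1)^{j-h}q^{eh+\binom{j-h}{2}}{d-h\brack d-j}{d-i\brack h}$$ (the eigenvalues of the bilinear forms graph $H_q(d,e,j)$ on $d\times e$ matrices over $\mathbb F_q$, adjacency meaning the difference has rank $j$). Also $b_h(i,j)=h(d+e-i-h)+(d-j)(j-h)+\binom{j-h}{2}$. *)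

(* Defs.v *)
From mathcomp Require Import all_boot all_order all_algebra.
Set Implicit Arguments. Unset Strict Implicit. Unset Printing Implicit Defensive.
Import Order.TTheory GRing.Theory Num.Theory.
Local Open Scope ring_scope.

Definition prime_power (q : nat) : Prop :=
  exists p k : nat, prime p /\ (0 < k)%N /\ q = (p ^ k)%N.

(* Gaussian binomial [m brack l] = prod_{t=1}^{l} (q^{m-t+1}-1)/(q^t-1), l >= 0,
   computed in rat.  (The exponent m+1-t is 0 when t = m+1, giving value 0
   for l > m, as in the paper's formula.) *)
Definition gauss (q m l : nat) : rat :=
  \prod_(1 <= t < l.+1) (((q%:R : rat) ^+ (m.+1 - t) - 1) / ((q%:R : rat) ^+ t - 1)).

(* Eigenvalue B_j(i) of the bilinear forms graph H_q(d,e,j). *)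
Definition Beig (q d e i j : nat) : rat :=
  \sum_(0 <= h < (minn j (d - i)).+1)
     (-1) ^+ (j - h) * (q%:R : rat) ^+ (e * h + 'C(j - h, 2))
       * gauss q (d - h) (d - j) * gauss q (d - i) h.

Definition bexp (d e h i j : nat) : nat :=
  (h * (d + e - i - h) + (d - j) * (j - h) + 'C(j - h, 2))%N.

(* Main.v *)
Require Import Defs.
From mathcomp Require Import all_boot all_order all_algebra.
From mathcomp Require Import ring lra zify.
Import Order.TTheory GRing.Theory Num.Theory.
Local Open Scope ring_scope.

Section G.
Variable x : rat.
Hypothesis x3 : 3 <= x.

Definition Dp l := \prod_(1 <= t < l.+1) (x ^+ t - 1).
Definition Qp l := \prod_(1 <= t < l.+1) x ^+ t.
Definition Np m l := \prod_(1 <= t < l.+1) (x ^+ (m.+1 - t) - 1).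

Lemma x1 : 1 <= x. Proof. have X := x3; lra. Qed.
Lemma expx1 n : 1 <= x ^+ n. Proof. exact: exprn_ege1 x1. Qed.
Lemma expxS n : 3 <= x ^+ n.+1.
Proof. rewrite exprS; have := expx1 n; have X := x3; nra. Qed.

Lemma prod_rev (F : nat -> rat) l :
  \prod_(1 <= t < l.+1) F (l.+1 - t)%N = \prod_(1 <= t < l.+1) F t.
Proof.
rewrite [RHS]big_nat_rev; apply: eq_bigr => t _.
by rewrite add1n subSS.
Qed.

Lemma Dp_gt0 l : 0 < Dp l.
Proof.
rewrite /Dp big_nat_cond; apply: prodr_gt0 => t /andP[/andP[t1 _] _].
case: t t1 => // t _; have := expxS t; lra.
Qed.

Lemma QpS l : Qp l.+1 = Qp l * x ^+ l.+1.
Proof. by rewrite /Qp big_nat_recr. Qed.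
Lemma DpS l : Dp l.+1 = Dp l * (x ^+ l.+1 - 1).
Proof. by rewrite /Dp big_nat_recr. Qed.

Lemma QD l : Qp l * (x ^+ l + 1) <= 2 * Dp l * x ^+ l.
Proof.
elim: l => [|l IH]; first by rewrite /Qp /Dp !big_geq // expr0; lra.
rewrite QpS DpS.
have Q0 : 0 <= Qp l.
  rewrite /Qp big_nat_cond; apply: prodr_ge0 => t _; exact: exprn_ge0 (le_trans ler01 x1).
have D0 := Dp_gt0 l.
have z1 := expx1 l.
rewrite exprS.
set z := x ^+ l in IH z1 *.
set D := Dp l in IH D0 *. set Q := Qp l in IH Q0 *.
have h1 : Q * (z + 1) * (x * z - 1) <= 2 * D * z * (x * z - 1).
  apply: ler_wpM2r => //; have X := x3; nra.
have h3 : 0 <= z * (x - 2) - 1 by have X := x3; nra.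
have h2 : Q * z * (x * z + 1) <= Q * (z + 1) * (x * z - 1).
  have := mulr_ge0 Q0 h3; nra.
have h4 : 0 <= x by have X := x3; lra.
have := ler_wpM2l h4 (le_trans h2 h1).
rewrite !mulrA; move=> H; apply: le_trans (le_trans _ H) _; rewrite le_eqVlt; apply/orP; left; apply/eqP; ring.
Qed.

Lemma QD_lt l : Qp l < 2 * Dp l.
Proof.
have := QD l; have := Dp_gt0 l; have := expx1 l.
have Q0 : 0 <= Qp l.
  rewrite /Qp big_nat_cond; apply: prodr_ge0 => t _; exact: exprn_ge0 (le_trans ler01 x1).
nra.
Qed.

Definition gx m l :=
  \prod_(1 <= t < l.+1) ((x ^+ (m.+1 - t) - 1) / (x ^+ t - 1)).

Lemma gx_ND m l : gx m l = Np m l / Dp l.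
Proof. by rewrite /gx prodf_div. Qed.

Lemma split_pow l m (F : nat -> rat) :
  \prod_(1 <= t < l.+1) (x ^+ (m - l) * F t) = x ^+ (l * (m - l)) * \prod_(1 <= t < l.+1) F t.
Proof. by rewrite big_split /= prodr_const_nat subn1 /= -exprM mulnC. Qed.

Lemma x0 : 0 <= x. Proof. have X := x3; lra. Qed.

Lemma gx_lb m l : (l <= m)%N -> x ^+ (l * (m - l)) <= gx m l.
Proof.
move=> lm; rewrite gx_ND ler_pdivlMr ?Dp_gt0 //.
rewrite /Dp -prod_rev -split_pow /Np big_nat_cond [X in _ <= X]big_nat_cond.
apply: ler_prod => t /andP[/andP[t1 tl] _].
have e : (m.+1 - t = (m - l) + (l.+1 - t))%N by lia.
rewrite e exprD.
have := expx1 (m - l); have : 1 <= x ^+ (l.+1 - t) by apply: expx1.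
move=> A B; apply/andP; split; nra.
Qed.

Lemma Np_ub m l : (l <= m)%N -> Np m l <= x ^+ (l * (m - l)) * Qp l.
Proof.
move=> lm; rewrite /Qp -prod_rev -split_pow /Np big_nat_cond [X in _ <= X]big_nat_cond.
apply: ler_prod => t /andP[/andP[t1 tl] _].
have e : (m.+1 - t = (m - l) + (l.+1 - t))%N by lia.
rewrite e exprD.
have := expx1 (m - l); have : 1 <= x ^+ (l.+1 - t) by apply: expx1.
move=> A B; apply/andP; split; nra.
Qed.

Lemma gx_ub m l : (l <= m)%N -> gx m l < 2 * x ^+ (l * (m - l)).
Proof.
move=> lm; rewrite gx_ND ltr_pdivrMr ?Dp_gt0 //.
have NB := Np_ub m l lm.
apply: le_lt_trans NB _.
have := QD_lt l; have : 0 < x ^+ (l * (m - l)) by apply: exprn_gt0; have X := x3; lra.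
move=> A B; nra.
Qed.

Lemma gx_mm m : gx m m = 1.
Proof.
rewrite gx_ND /Np.
have -> : \prod_(1 <= t < m.+1) (x ^+ (m.+1 - t) - 1) = Dp m.
  by rewrite /Dp -(prod_rev (fun t => x ^+ t - 1)).
by rewrite divff // gt_eqF // Dp_gt0.
Qed.

Lemma gx_rec m l : gx m l.+1 = gx m l * ((x ^+ (m - l) - 1) / (x ^+ l.+1 - 1)).
Proof. by rewrite /gx big_nat_recr //= subSS. Qed.

Lemma gx_R1 m l : gx m.+1 l * (x ^+ (m.+1 - l) - 1) = gx m l * (x ^+ m.+1 - 1).
Proof.
elim: l => [|l IH]; first by rewrite /gx !big_geq // !mul1r subn0.
rewrite !gx_rec subSS.
transitivity ((gx m.+1 l * (x ^+ (m.+1 - l) - 1)) * ((x ^+ (m - l) - 1) / (x ^+ l.+1 - 1))); first by ring.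
rewrite IH; ring.
Qed.

End G.

Lemma key (x u v w A B : rat) : 3 <= x -> 1 <= u -> 1 <= v -> 1 <= w -> 1 <= A -> 3 <= B ->
  4 * A * (B * u - 1) * (v - 1) < 3 * (w * v * u) * (x * A - 1) * (B - 1).
Proof.
move=> x3 u1 v1 w1 A1 B3.
have h1 : 4 * A * B <= 3 * (x * A - 1) * (B - 1).
  have e1 : 0 <= (x - 3) * A * (B - 1).
    apply: mulr_ge0; [apply: mulr_ge0|]; lra.
  have e2 : 0 <= (A - 1) * (5 * B - 9) by apply: mulr_ge0; lra.
  nra.
have h2 : 4 * A * (B * u - 1) * (v - 1) < 4 * A * B * (u * v).
  have : 0 < B * u + v - 1 by nra.
  have : 0 < A by lra.
  move=> P Q; have := mulr_gt0 P Q; nra.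
have h3 : 4 * A * B * (u * v) <= 3 * (x * A - 1) * (B - 1) * (u * v).
  apply: ler_wpM2r => //; apply: mulr_ge0; lra.
have h4 : 0 <= 3 * (x * A - 1) * (B - 1) * (u * v).
  have : 0 <= 4 * A * B * (u * v).
    apply: mulr_ge0; [apply: mulr_ge0; [apply: mulr_ge0|]|apply: mulr_ge0]; lra.
  lra.
have h5 : 3 * (x * A - 1) * (B - 1) * (u * v) <= 3 * (w * v * u) * (x * A - 1) * (B - 1).
  have := ler_wpM2r h4 w1; rewrite mul1r => H; apply: le_trans H _.
  rewrite le_eqVlt; apply/orP; left; apply/eqP; ring.
lra.
Qed.

Section Alt.
Variable a : nat -> rat.
Definition S n := \sum_(0 <= h < n.+1) (-1) ^+ (n - h) * a h.

Lemma S0 : S 0 = a 0.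
Proof. by rewrite /S big_nat1 expr0 mul1r. Qed.

Lemma SS n : S n.+1 = a n.+1 - S n.
Proof.
rewrite /S big_nat_recr //= subnn expr0 mul1r addrC; congr (_ + _).
rewrite -sumrN big_nat_cond [RHS]big_nat_cond; apply: eq_bigr => h /andP[/andP[_ hn] _].
by rewrite subSn // exprS mulN1r mulNr.
Qed.

Lemma Sbound N : (forall h, (h <= N)%N -> 0 < a h) ->
  (forall h, (h < N)%N -> a h <= a h.+1) ->
  forall n, (n <= N)%N -> 0 <= S n /\ S n <= a n.
Proof.
move=> Hp Hm; elim=> [|n IH] nN.
  rewrite S0; have := Hp 0%N (leq0n _); lra.
have [IH1 IH2] := IH (ltnW nN).
have := Hm n nN; have := Hp n.+1 nN; rewrite SS; lra.
Qed.
End Alt.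

Lemma gauss_gx q m l : gauss q m l = gx (q%:R) m l.
Proof. by []. Qed.

Theorem lemma4p2 (q d e i j : nat) :
  prime_power q -> (3 <= q)%N ->
  (1 <= d)%N -> (d <= e)%N -> (i <= d)%N -> (1 <= j)%N -> (j <= d)%N ->
  let s := bexp d e (minn j (d - i)) i j in
  (1 / 4 : rat) * (q%:R : rat) ^+ s < `|Beig q d e i j| /\
  `|Beig q d e i j| < 2 * (q%:R : rat) ^+ s.
Proof.
move=> _ q3 d1 de id j1 jd s.
rewrite /Beig.
under eq_bigr do rewrite !gauss_gx.
rewrite /s /bexp.
set x : rat := q%:R.
have x3 : 3 <= x by rewrite /x (ler_nat _ 3 q).
have HHc : minn j (d - i) = j \/ minn j (d - i) = (d - i)%N.
  by rewrite /minn; case: ifP; auto.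
have Hj : (minn j (d - i) <= j)%N by apply: geq_minl.
have Hdi : (minn j (d - i) <= d - i)%N by apply: geq_minr.
move: (minn j (d - i)) Hj Hdi HHc => H Hj Hdi HHc.
pose a h := x ^+ (e * h + 'C(j - h, 2)) * gx x (d - h) (d - j) * gx x (d - i) h.
have EB : \sum_(0 <= h < H.+1)
     (-1) ^+ (j - h) * x ^+ (e * h + 'C(j - h, 2)) * gx x (d - h) (d - j) * gx x (d - i) h
   = (-1) ^+ (j - H) * S a H.
  rewrite /S big_distrr /=; apply: eq_big_nat => h /andP[_ hH].
  rewrite /a mulrA -exprD.
  have -> : (j - H + (H - h) = j - h)%N by lia.
  by rewrite !mulrA.
rewrite EB.
have xp n : 0 < x ^+ n by apply: exprn_gt0; lra.
have gpos m l : (l <= m)%N -> 0 < gx x m l.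
  by move=> L; exact: lt_le_trans (xp _) (gx_lb x x3 _ _ L).
have hpos h : (h <= H)%N -> 0 < a h.
  move=> hH; rewrite /a; apply: mulr_gt0; first apply: mulr_gt0.
  - exact: xp.
  - have L : (d - j <= d - h)%N by lia.
    exact: lt_le_trans (xp _) (gx_lb x x3 _ _ L).
  - have L : (h <= d - i)%N by lia.
    exact: lt_le_trans (xp _) (gx_lb x x3 _ _ L).
have hrat h : (h < H)%N -> 4 * a h < 3 * a h.+1.
  move=> hH.
  have R := gx_R1 x (d - h.+1) (d - j).
  have e1 : ((d - h.+1).+1 = d - h)%N by lia.
  rewrite e1 in R.
  have e2 : (d - h - (d - j) = (j - h.+1).+1)%N by lia.
  rewrite e2 exprS in R.
  have Exdh : x ^+ (d - h) = x ^+ (d - i - h) * x ^+ i.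
    by rewrite -exprD; congr (_ ^+ _); lia.
  rewrite Exdh in R.
  have v3 := expxS x x3 h.
  have EG2 : gx x (d - i) h.+1 * (x ^+ h.+1 - 1) = gx x (d - i) h * (x ^+ (d - i - h) - 1).
    rewrite gx_rec -mulrA divfK //; rewrite subr_eq0; apply/eqP => E; rewrite E in v3; lra.
  have Exe : x ^+ e = x ^+ (e - h - i - 1) * x ^+ h.+1 * x ^+ i.
    by rewrite -!exprD; congr (_ ^+ _); lia.
  have EP : x ^+ (e * h + 'C(j - h, 2)) * x ^+ e = x ^+ (e * h.+1 + 'C(j - h.+1, 2)) * x ^+ (j - h.+1).
    rewrite -!exprD; congr (_ ^+ _).
    have -> : (j - h = (j - h.+1).+1)%N by lia.
    rewrite binS bin1 mulnS; lia.
  rewrite Exe in EP.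
  have B3 : 3 <= x ^+ (d - i - h).
    have -> : (d - i - h = (d - i - h.+1).+1)%N by lia.
    exact: expxS x x3 _.
  have A1 := expx1 x x3 (j - h.+1).
  have u1 := expx1 x x3 i.
  have w1 := expx1 x x3 (e - h - i - 1).
  have v1 : 1 <= x ^+ h.+1 by lra.
  have G1p : 0 < gx x (d - h.+1) (d - j) by apply: gpos; lia.
  have G2p : 0 < gx x (d - i) h.+1 by apply: gpos; lia.
  rewrite /a.
  set P0 := x ^+ (e * h + 'C(j - h, 2)) in EP *.
  set P1 := x ^+ (e * h.+1 + 'C(j - h.+1, 2)) in EP *.
  set G1a := gx x (d - h) (d - j) in R *.
  set G1b := gx x (d - h.+1) (d - j) in R G1p *.
  set G2a := gx x (d - i) h in EG2 *.
  set G2b := gx x (d - i) h.+1 in EG2 G2p *.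
  set A := x ^+ (j - h.+1) in R EP A1 *.
  set B := x ^+ (d - i - h) in R EG2 B3 *.
  set u := x ^+ i in R EP u1 *.
  set v := x ^+ h.+1 in EG2 EP v1 v3 *.
  set w := x ^+ (e - h - i - 1) in EP w1 *.
  have P1p : 0 < P1 by apply: xp.
  have Kp : 0 < w * v * u * (x * A - 1) * (B - 1).
    apply: mulr_gt0; [apply: mulr_gt0; [apply: mulr_gt0; [apply: mulr_gt0|]|]|]; nra.
  rewrite -(ltr_pM2r Kp).
  have Cp : 0 < P1 * G1b * G2b by apply: mulr_gt0; [apply: mulr_gt0|].
  have KK := @key x u v w A B x3 u1 v1 w1 A1 B3.
  rewrite -(ltr_pM2l Cp) in KK.
  have L1 : 4 * (P0 * G1a * G2a) * (w * v * u * (x * A - 1) * (B - 1))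
     = 4 * (P0 * (w * v * u)) * (G1a * (x * A - 1)) * (G2a * (B - 1)) by ring.
  rewrite L1 EP R -EG2.
  apply: le_lt_trans (lt_le_trans KK _).
    rewrite le_eqVlt; apply/orP; left; apply/eqP; ring.
  rewrite le_eqVlt; apply/orP; left; apply/eqP; ring.
have hmono h : (h < H)%N -> a h <= a h.+1.
  move=> hH; have := hrat h hH; have := hpos h (ltnW hH); lra.
have Sb := @Sbound a H hpos hmono.
have [SH0 SHa] := Sb H (leqnn H).
have -> : `|(-1) ^+ (j - H) * S a H| = S a H.
  by rewrite normrM normrX normrN1 expr1n mul1r ger0_norm.
set E1 := ((d - j) * (d - H - (d - j)))%N.
set E2 := (H * (d - i - H))%N.
have Es : x ^+ (H * (d + e - i - H) + (d - j) * (j - H) + 'C(j - H, 2))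
    = x ^+ (e * H + 'C(j - H, 2)) * x ^+ E1 * x ^+ E2.
  rewrite -!exprD; congr (_ ^+ _); rewrite /E1 /E2.
  have -> : (d - H - (d - j) = j - H)%N by lia.
  have -> : (d + e - i - H = e + (d - i - H))%N by lia.
  rewrite mulnDr [(H * e)%N]mulnC; lia.
rewrite Es.
have lo : x ^+ (e * H + 'C(j - H, 2)) * x ^+ E1 * x ^+ E2 <= a H.
  rewrite /a; apply: ler_pM; [apply: mulr_ge0; apply: ltW; exact: xp| exact: ltW (xp _)| |].
    apply: ler_pM; [exact: ltW (xp _)| exact: ltW (xp _)| by []|].
    by apply: gx_lb => //; lia.
  by apply: gx_lb => //; lia.
have hi : a H < 2 * (x ^+ (e * H + 'C(j - H, 2)) * x ^+ E1 * x ^+ E2).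
  rewrite /a; case: HHc => HH.
  - have -> : gx x (d - H) (d - j) = 1 by rewrite HH gx_mm.
    have -> : x ^+ E1 = 1 by rewrite /E1 HH subnn muln0 expr0.
    have G := gx_ub x x3 _ _ Hdi.
    have := xp (e * H + 'C(j - H, 2))%N.
    move=> P; rewrite !mulr1; nra.
  - have -> : gx x (d - i) H = 1 by rewrite HH gx_mm.
    have -> : x ^+ E2 = 1 by rewrite /E2 HH subnn muln0 expr0.
    have L : (d - j <= d - H)%N by lia.
    have G := gx_ub x x3 _ _ L.
    have := xp (e * H + 'C(j - H, 2))%N.
    move=> P; rewrite !mulr1; nra.
have xsp : 0 < x ^+ (e * H + 'C(j - H, 2)) * x ^+ E1 * x ^+ E2.
  by apply: mulr_gt0; [apply: mulr_gt0|]; apply: xp.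
split; last lra.
have [H0|Hp] := posnP H.
  move: SHa SH0 lo hi; rewrite H0 S0; lra.
have ES := SS a H.-1; rewrite prednK // in ES.
have [Sm0 Sm1] := Sb H.-1 (leq_pred H).
have Hr := hrat H.-1 ltac:(lia); rewrite prednK // in Hr.
lra.
Qed.
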